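(* Let $A>0$, let $c_0\in\mathrm{Imm}(S^1,\mathbb R^2)$ have constant speed $|c_{0,\theta}|\equiv\ell/2\pi$ where $\ell=\ell(c_0)$, and let $0<\varepsilon<\min\{2\sqrt{A\ell},\ell^{3/2}\}/8$. Let $c:[0,1]\times S^1\to\mathbb R^2$ be a smooth path in $\mathrm{Imm}(S^1,\mathbb R^2)$ with $c(0,\cdot)=c_0$ which is horizontal ($\langle c_t,c_\theta\rangle\equiv0$) and satisfies $\int_{S^1}(1+A\kappa_{c(t)}^2)|c_t|^2|c_\theta|\,d\theta=\varepsilon^2$ for all $t\in[0,1]$. Then with $\eta=4(\ell^{3/4}A^{-1/4}+\ell^{1/4})\sqrt\varepsilon$, $$\max_{\theta\in S^1}|c(0,\theta)-c(1,\theta)|\le\eta.$$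
   Context: $S^1=\mathbb R/2\pi\mathbb Z$, $\mathbb R^2\cong\mathbb C$. $\mathrm{Imm}(S^1,\mathbb R^2)$ is the space of smooth immersions; a smooth path in it is a jointly smooth map $c(t,\theta)$ with each $c(t,\cdot)$ an immersion. $\ell(c)=\int_{S^1}|c_\theta|\,d\theta$, $\kappa_c=\det(c_\theta,c_{\theta\theta})/|c_\theta|^3$. *)

(* Defs.v *)
From Stdlib Require Import Reals.
From Coquelicot Require Import Coquelicot.
Open Scope R_scope.

Definition I01 (t : R) : Prop := 0 <= t <= 1.

Definition cont01 (f : R -> R -> R) : Prop :=
  forall t th, I01 t -> forall eps, 0 < eps -> exists del, 0 < del /\
    forall t' th', I01 t' -> Rabs (t' - t) < del -> Rabs (th' - th) < del ->
      Rabs (f t' th' - f t th) < eps.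

Definition pderiv_t01 (f g : R -> R -> R) : Prop :=
  forall t th, I01 t -> forall eps, 0 < eps -> exists del, 0 < del /\
    forall h, h <> 0 -> I01 (t + h) -> Rabs h < del ->
      Rabs ((f (t + h) th - f t th) / h - g t th) < eps.

Definition pderiv_th01 (f g : R -> R -> R) : Prop :=
  forall t th, I01 t -> is_derive (f t) th (g t th).

(* D i j is the mixed partial derivative d_t^i d_theta^j of D 0 0;
   all of them exist and are jointly continuous on [0,1] x R:
   i.e. D 0 0 is smooth on [0,1] x R. *)
Definition smooth_family (D : nat -> nat -> R -> R -> R) : Prop :=
  forall i j, cont01 (D i j) /\ pderiv_t01 (D i j) (D (S i) j)
              /\ pderiv_th01 (D i j) (D i (S j)).

(* For a planar curve given by components (X, Y) as functions of theta,
   with first derivatives (X1, Y1) and second derivatives (X2, Y2): *)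
Definition speed (X1 Y1 : R) : R := sqrt (X1 ^ 2 + Y1 ^ 2).

Definition curvature (X1 Y1 X2 Y2 : R) : R :=
  (X1 * Y2 - Y1 * X2) / (speed X1 Y1) ^ 3.

(* Main.v *)
Require Import Defs.
From Stdlib Require Import Reals Lra Psatz Lia ZArith.
From Coquelicot Require Import Coquelicot.
Open Scope R_scope.

Ltac rring := (match goal with |- @eq _ ?a ?b => change (@eq R a b) end); ring.
Ltac rfield := (match goal with |- @eq _ ?a ?b => change (@eq R a b) end); field.

Definition clamp (t : R) : R := Rmax 0 (Rmin 1 t).

Lemma clamp_I01 t : I01 (clamp t).
Proof. unfold clamp, I01, Rmax, Rmin; repeat destruct Rle_dec; lra. Qed.

Lemma clamp_id t : I01 t -> clamp t = t.
Proof. unfold clamp, I01, Rmax, Rmin; repeat destruct Rle_dec; lra. Qed.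

Lemma clamp_lip u t : Rabs (clamp u - clamp t) <= Rabs (u - t).
Proof. unfold clamp, Rmax, Rmin; repeat destruct Rle_dec;
  repeat (match goal with |- context [Rabs ?x] => destruct (Rcase_abs x) ; [rewrite (Rabs_left x) by lra | rewrite (Rabs_right x) by lra] end); lra. Qed.

Lemma locally_R_intro (x : R) (P : R -> Prop) (d : R) : 0 < d ->
  (forall y, Rabs (y - x) < d -> P y) -> locally x P.
Proof.
  intros Hd H. exists (mkposreal d Hd). intros y Hy. apply H.
  exact Hy.
Qed.

Lemma locally_R_elim (x : R) (P : R -> Prop) : locally x P ->
  exists d, 0 < d /\ forall y, Rabs (y - x) < d -> P y.
Proof.
  intros [e He]. exists e. split. apply cond_pos. intros y Hy. apply He. exact Hy.
Qed.

Definition C2 (F : R -> R -> R) := forall t th, continuity_2d_pt F t th.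
Definition DT (F F' : R -> R -> R) := forall t th, 0 < t < 1 -> is_derive (fun u => F u th) t (F' t th).

Definition clp (F : R -> R -> R) := fun t th => F (clamp t) th.

Lemma cont01_C2 F : cont01 F -> C2 (clp F).
Proof.
  intros HF t th eps. unfold clp.
  destruct (HF (clamp t) th (clamp_I01 t) eps (cond_pos eps)) as [d [Hd H]].
  exists (mkposreal d Hd). intros u v Hu Hv. simpl in *.
  apply H; [apply clamp_I01| |exact Hv].
  eapply Rle_lt_trans. apply clamp_lip. exact Hu.
Qed.

Lemma pderiv_DT F F' : pderiv_t01 F F' -> DT (clp F) (clp F').
Proof.
  intros HF t th Ht. unfold clp. rewrite (clamp_id t) by (unfold I01; lra).
  apply is_derive_Reals. intros eps Heps.
  destruct (HF t th ltac:(unfold I01; lra) eps Heps) as [d [Hd H]].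
  exists (mkposreal (Rmin d (Rmin t (1 - t))) ltac:(apply Rmin_pos; [lra|apply Rmin_pos;lra])).
  intros h Hh Hhd. simpl in Hhd.
  assert (Hm1 := Rmin_l d (Rmin t (1-t))). assert (Hm2 := Rmin_r d (Rmin t (1-t))).
  assert (Hm3 := Rmin_l t (1-t)). assert (Hm4 := Rmin_r t (1-t)).
  assert (Hb : -t < h < 1 - t) by (revert Hhd; unfold Rabs; destruct Rcase_abs; lra).
  rewrite (clamp_id (t+h)), (clamp_id t) by (unfold I01; lra).
  apply H; [exact Hh | unfold I01; lra | ].
  revert Hhd; unfold Rabs; destruct Rcase_abs; lra.
Qed.
Lemma C2_cont1 F t th : C2 F -> continuous (F t) th.
Proof.
  intros H. apply continuity_pt_filterlim. apply continuity_pt_locally. intros eps.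
  destruct (H t th eps) as [d Hd]. apply locally_R_intro with d. apply cond_pos.
  intros y Hy. apply Hd. rewrite Rminus_eq_0, Rabs_R0. apply cond_pos. exact Hy.
Qed.

Lemma C2_ex_RInt F a b t : C2 F -> ex_RInt (F t) a b.
Proof. intros H. apply (ex_RInt_continuous (V:=R_CompleteNormedModule)). intros z _. apply C2_cont1. exact H. Qed.

Lemma RInt_minus_R f g a b : ex_RInt f a b -> ex_RInt g a b ->
  RInt (fun x => f x - g x) a b = RInt f a b - RInt g a b.
Proof. intros Hf Hg. exact (RInt_minus (V:=R_CompleteNormedModule) f g a b Hf Hg). Qed.
Lemma RInt_plus_R f g a b : ex_RInt f a b -> ex_RInt g a b ->
  RInt (fun x => f x + g x) a b = RInt f a b + RInt g a b.
Proof. intros Hf Hg. exact (RInt_plus (V:=R_CompleteNormedModule) f g a b Hf Hg). Qed.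
Lemma RInt_scal_R f a b l : ex_RInt f a b ->
  RInt (fun x => l * f x) a b = l * RInt f a b.
Proof. intros Hf. exact (RInt_scal (V:=R_CompleteNormedModule) f a b l Hf). Qed.
Lemma ex_RInt_minus_R f g a b : ex_RInt f a b -> ex_RInt g a b -> ex_RInt (fun x => f x - g x) a b.
Proof. intros Hf Hg. exact (ex_RInt_minus (V:=R_NormedModule) f g a b Hf Hg). Qed.

Lemma RInt_abs_bound f a b M : a <= b -> ex_RInt f a b ->
  (forall x, a <= x <= b -> Rabs (f x) <= M) -> Rabs (RInt f a b) <= M * (b - a).
Proof.
  intros Hab Hf HM. rewrite Rmult_comm. apply abs_RInt_le_const; auto.
Qed.

Lemma RInt_param_cont F a b t0 : a <= b -> C2 F -> continuity_pt (fun t => RInt (F t) a b) t0.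
Proof.
  intros Hab H. apply continuity_pt_locally. intros eps.
  assert (He : 0 < eps / (b - a + 1)) by (apply Rdiv_lt_0_compat; [apply cond_pos|lra]).
  destruct (uniform_continuity_2d_1d' F a b t0 (fun x _ => H t0 x) (mkposreal _ He)) as [d Hd].
  apply locally_R_intro with d. apply cond_pos. intros u Hu.
  rewrite <- RInt_minus_R by (apply C2_ex_RInt; exact H).
  eapply Rle_lt_trans. apply RInt_abs_bound with (M := eps / (b - a + 1)); auto.
  apply ex_RInt_minus_R; apply C2_ex_RInt; exact H.
  intros x Hx. left.
  assert (Hd' := Hd x t0 x u ltac:(lra) ltac:(pose proof (cond_pos d); lra) ltac:(lra)
     ltac:(revert Hu; unfold Rabs; destruct Rcase_abs; lra)
     ltac:(rewrite Rminus_eq_0, Rabs_R0; apply cond_pos)).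
  exact Hd'.
  assert (0 < eps) by apply cond_pos.
  apply Rlt_le_trans with (eps / (b - a + 1) * (b - a + 1)).
  apply Rmult_lt_compat_l; auto; lra. right. field. lra.
Qed.

Lemma RInt_param_der F F' a b t : C2 F -> C2 F' -> DT F F' -> 0 < t < 1 ->
  is_derive (fun u => RInt (F u) a b) t (RInt (F' t) a b).
Proof.
  intros HF HF' HD Ht.
  assert (Hd : 0 < Rmin t (1 - t)) by (apply Rmin_pos; lra).
  assert (Hloc : forall u, Rabs (u - t) < Rmin t (1 - t) -> 0 < u < 1).
  { intros u Hu. pose proof (Rmin_l t (1-t)). pose proof (Rmin_r t (1-t)).
    revert Hu; unfold Rabs; destruct Rcase_abs; lra. }
  replace (RInt (F' t) a b) with (RInt (fun th => Derive (fun u => F u th) t) a b).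
  apply (is_derive_RInt_param F a b t).
  - apply locally_R_intro with (Rmin t (1 - t)); auto.
    intros y Hy th _. exists (F' y th). apply HD. auto.
  - intros th _. apply continuity_2d_pt_ext_loc with F'. 2: apply HF'.
    exists (mkposreal _ Hd). intros u v Hu Hv. simpl in Hu.
    symmetry. apply is_derive_unique. apply HD. auto.
  - apply locally_R_intro with 1. lra. intros y _. apply C2_ex_RInt. exact HF.
  - apply RInt_ext. intros x _. apply is_derive_unique. apply HD. auto.
Qed.
Lemma sqrtL_bound (L Ld : R -> R) (eps A : R) :
 0 < A -> 0 < eps ->
 (forall t, continuity_pt L t) ->
 (forall t, 0 < t < 1 -> is_derive L t (Ld t)) ->
 (forall t, 0 <= t <= 1 -> 0 < L t) ->
 (forall t, 0 <= t <= 1 -> Rabs (Ld t) <= eps * sqrt (L t) / sqrt A) ->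
 forall t, 0 <= t <= 1 -> Rabs (sqrt (L t) - sqrt (L 0)) <= eps / (2 * sqrt A).
Proof.
  intros HA He HLc HLd HLp HLb t Ht.
  assert (HsA : 0 < sqrt A) by (apply sqrt_lt_R0; lra).
  destruct (Req_dec t 0) as [->|Ht0].
  { rewrite Rminus_eq_0, Rabs_R0. apply Rlt_le, Rdiv_lt_0_compat; lra. }
  destruct (MVT_gen (fun t => sqrt (L t)) 0 t (fun t => Ld t / (2 * sqrt (L t)))) as [c [Hc Heq]].
  - intros x Hx. rewrite Rmin_left, Rmax_right in Hx by lra.
    apply (is_derive_sqrt L x (Ld x)). apply HLd. lra. apply HLp. lra.
  - intros x Hx. apply (continuity_pt_comp L sqrt). apply HLc. apply continuity_pt_sqrt.
    rewrite Rmin_left, Rmax_right in Hx by lra. left; apply HLp; lra.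
  - rewrite Rmin_left, Rmax_right in Hc by lra.
    rewrite Heq, Rminus_0_r.
    assert (HLc0 := HLp c ltac:(lra)). assert (Hq : 0 < sqrt (L c)) by (apply sqrt_lt_R0; lra).
    assert (Hb := HLb c ltac:(lra)).
    rewrite Rabs_mult, (Rabs_right t) by lra.
    unfold Rdiv at 1. rewrite Rabs_mult, Rabs_inv, (Rabs_right (2 * sqrt (L c))) by lra.
    apply Rle_trans with (eps * sqrt (L c) / sqrt A * / (2 * sqrt (L c)) * 1).
    apply Rmult_le_compat; try lra. apply Rmult_le_pos. apply Rabs_pos. left; apply Rinv_0_lt_compat; lra.
    apply Rmult_le_compat_r. left; apply Rinv_0_lt_compat; lra. exact Hb.
    right. field. lra.
Qed.

Lemma time_part (L N Ld Nd : R -> R) (eps A : R) :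
 0 < A -> 0 < eps ->
 (forall t, continuity_pt L t) -> (forall t, continuity_pt N t) ->
 (forall t, 0 < t < 1 -> is_derive L t (Ld t)) -> (forall t, 0 < t < 1 -> is_derive N t (Nd t)) ->
 (forall t, 0 <= t <= 1 -> 0 < L t) ->
 (forall t, 0 <= t <= 1 -> Rabs (Ld t) <= eps * sqrt (L t) / sqrt A) ->
 (forall t, 0 <= t <= 1 -> Rabs (Nd t * L t - N t * Ld t) <= L t * eps * sqrt (L t) + L t ^ 2 * eps * sqrt (L t) / sqrt A) ->
 eps / (2 * sqrt A) < sqrt (L 0) ->
 sqrt (L 1) <= sqrt (L 0) + eps / (2 * sqrt A) /\
 N 1 / L 1 - N 0 / L 0 <= eps / (sqrt (L 0) - eps / (2 * sqrt A)) + eps * (sqrt (L 0) + eps / (2 * sqrt A)) / sqrt A.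
Proof.
  intros HA He HLc HNc HLd HNd HLp HLb HNb Hk.
  assert (HsA : 0 < sqrt A) by (apply sqrt_lt_R0; lra).
  assert (Hsq := sqrtL_bound L Ld eps A HA He HLc HLd HLp HLb).
  set (k := eps / (2 * sqrt A)) in *.
  split.
  { assert (H1 := Hsq 1 ltac:(lra)). revert H1; unfold Rabs; destruct Rcase_abs; lra. }
  destruct (MVT_gen (fun t => N t / L t) 0 1 (fun t => (Nd t * L t - N t * Ld t) / L t ^ 2)) as [c [Hc Heq]].
  - intros x Hx. rewrite Rmin_left, Rmax_right in Hx by lra.
    apply is_derive_div. apply HNd; lra. apply HLd; lra. apply Rgt_not_eq, HLp; lra.
  - intros x Hx. rewrite Rmin_left, Rmax_right in Hx by lra.
    apply continuity_pt_div; auto. apply Rgt_not_eq, HLp; lra.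
  - rewrite Rmin_left, Rmax_right in Hc by lra.
    rewrite Heq, Rminus_0_r, Rmult_1_r.
    assert (HLc0 := HLp c Hc). assert (Hq : 0 < sqrt (L c)) by (apply sqrt_lt_R0; lra).
    assert (Hb := HNb c Hc). assert (Hs := Hsq c Hc).
    assert (Hs1 : sqrt (L 0) - k <= sqrt (L c) <= sqrt (L 0) + k) by (revert Hs; unfold Rabs; destruct Rcase_abs; lra).
    assert (HLq : L c = sqrt (L c) * sqrt (L c)) by (rewrite sqrt_sqrt; lra).
    set (q := sqrt (L c)) in *. set (Lc := L c) in *.
    set (Z := Nd c * Lc - N c * Ld c) in *.
    apply Rle_trans with (Rabs Z / Lc ^ 2).
    { unfold Rdiv. apply Rmult_le_compat_r. left; apply Rinv_0_lt_compat; apply pow_lt; lra. apply Rle_abs. }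
    apply Rle_trans with ((Lc * eps * q + Lc ^ 2 * eps * q / sqrt A) / Lc ^ 2).
    { unfold Rdiv. apply Rmult_le_compat_r. left; apply Rinv_0_lt_compat; apply pow_lt; lra. exact Hb. }
    replace ((Lc * eps * q + Lc ^ 2 * eps * q / sqrt A) / Lc ^ 2) with (eps / q + eps * q / sqrt A)
      by (rewrite HLq; field; lra).
    apply Rplus_le_compat.
    + unfold Rdiv. apply Rmult_le_compat_l. lra. apply Rinv_le_contravar; lra.
    + unfold Rdiv. apply Rmult_le_compat_r. left; apply Rinv_0_lt_compat; lra. apply Rmult_le_compat_l; lra.
Qed.
Lemma abs_le_of_sq z R0 : 0 <= R0 -> z ^ 2 <= R0 ^ 2 -> Rabs z <= R0.
Proof.
  intros H1 H2. rewrite <- (Rabs_right R0) by lra. apply Rsqr_le_abs_0. unfold Rsqr. nra.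
Qed.

Lemma pw_st a b p q m n A g st : 0 < speed p q -> a * p + b * q = 0 ->
  st * speed p q = - (a * m + b * n) -> 0 < A -> 0 < g ->
  2 * Rabs st <= g * ((1 + A * curvature p q m n ^ 2) * (a ^ 2 + b ^ 2) * speed p q) + speed p q / (g * A).
Proof.
  intros HS Horth Hst HA Hg. unfold curvature in *.
  set (S := speed p q) in *.
  assert (HS2 : S * S = p * p + q * q) by (unfold S, speed; rewrite sqrt_sqrt; nra).
  set (K := (p * n - q * m) / S ^ 3).
  assert (HK : K * S ^ 3 = p * n - q * m) by (unfold K; field; lra).
  assert (Hid : (a * m + b * n) * (p * p + q * q) = (a * p + b * q) * (p * m + q * n) + (p * b - q * a) * (p * n - q * m)) by ring.
  assert (Hst2 : st = - (p * b - q * a) * K).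
  { rewrite Horth, <- HS2, <- HK in Hid. apply Rmult_eq_reg_r with (S ^ 3). 2: apply pow_nonzero; lra.
    replace (st * S ^ 3) with ((st * S) * (S * S)) by ring. rewrite Hst. nra. }
  assert (Hpb : (p * b - q * a) ^ 2 = (a ^ 2 + b ^ 2) * (S * S)).
  { rewrite HS2. replace ((p * b - q * a) ^ 2) with ((a*a+b*b)*(p*p+q*q) - (a*p+b*q)^2) by ring. rewrite Horth. ring. }
  assert (Hsq : st ^ 2 = (a ^ 2 + b ^ 2) * (S * S) * K ^ 2) by (rewrite Hst2, <- Hpb; ring).
  set (E := (1 + A * K ^ 2) * (a ^ 2 + b ^ 2) * S).
  assert (HE : 0 <= E) by (unfold E; apply Rmult_le_pos; [apply Rmult_le_pos|lra]; nra).
  assert (Hi : 0 < S / (g * A)) by (apply Rdiv_lt_0_compat; nra).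
  replace (2 * Rabs st) with (Rabs (2 * st)) by (rewrite Rabs_mult, Rabs_right by lra; ring).
  apply abs_le_of_sq. nra.
  assert (HES : E * (S / (g * A)) * g = E * S / A) by (field; lra).
  assert (H4 : E * S / A >= st ^ 2).
  { unfold E. rewrite Hsq. unfold Rdiv. replace ((1 + A * K ^ 2) * (a ^ 2 + b ^ 2) * S * S * / A)
      with ((a^2+b^2)*(S*S) * / A + (a ^ 2 + b ^ 2) * (S * S) * K ^ 2) by (field; lra).
    assert (0 <= (a^2+b^2)*(S*S) * / A) by (apply Rmult_le_pos; [nra| left; apply Rinv_0_lt_compat; lra]). lra. }
  set (w := S / (g * A)) in *.
  assert (Hsq2 : (g * E + w) ^ 2 = (g * E - w) ^ 2 + 4 * (E * w * g)) by ring.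
  assert (0 <= (g * E - w) ^ 2) by apply pow2_ge_0.
  replace ((2 * st) ^ 2) with (4 * st ^ 2) by ring. lra.
Qed.

Lemma pw_ft a b p q m n u1 u2 A g ft : 0 < speed p q -> u1 ^ 2 + u2 ^ 2 = 1 -> ft = u1 * a + u2 * b ->
  0 <= A -> 0 < g ->
  2 * Rabs (ft * speed p q) <= g * ((1 + A * curvature p q m n ^ 2) * (a ^ 2 + b ^ 2) * speed p q) + speed p q / g.
Proof.
  intros HS Hu Hft HA Hg.
  set (S := speed p q) in *. set (K := curvature p q m n).
  set (E := (1 + A * K ^ 2) * (a ^ 2 + b ^ 2) * S).
  assert (HE : E >= (a ^ 2 + b ^ 2) * S).
  { unfold E. assert (0 <= A * K^2 * ((a^2+b^2) * S)).
    { apply Rmult_le_pos. apply Rmult_le_pos; [lra|apply pow2_ge_0]. apply Rmult_le_pos; nra. }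
    nra. }
  assert (HCS : ft ^ 2 <= a ^ 2 + b ^ 2).
  { rewrite Hft. replace (a^2+b^2) with ((u1^2+u2^2)*(a^2+b^2)) by (rewrite Hu; ring).
    assert (0 <= (u1*b - u2*a)^2) by apply pow2_ge_0.
    replace ((u1 ^ 2 + u2 ^ 2) * (a ^ 2 + b ^ 2)) with ((u1 * a + u2 * b) ^ 2 + (u1*b - u2*a)^2) by ring. lra. }
  assert (Hi : 0 < S / g) by (apply Rdiv_lt_0_compat; nra).
  replace (2 * Rabs (ft * S)) with (Rabs (2 * ft * S)) by (rewrite !Rabs_mult, (Rabs_right 2) by lra; ring).
  assert (HE0 : 0 <= E) by (assert (0 <= (a^2+b^2)*S) by (apply Rmult_le_pos; nra); lra).
  apply abs_le_of_sq. apply Rplus_le_le_0_compat; [apply Rmult_le_pos|]; lra.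
  assert (HES : E * (S / g) * g = E * S) by (field; lra).
  set (w := S / g) in *.
  assert (Hsq2 : (g * E + w) ^ 2 = (g * E - w) ^ 2 + 4 * (E * w * g)) by ring.
  assert (0 <= (g * E - w) ^ 2) by apply pow2_ge_0.
  assert (ft ^ 2 * (S * S) <= (a^2+b^2) * (S * S)) by (apply Rmult_le_compat_r; nra).
  assert (E * S >= (a ^ 2 + b ^ 2) * S * S) by (apply Rmult_ge_compat_r; lra).
  replace ((2 * ft * S) ^ 2) with (4 * (ft ^ 2 * (S * S))) by ring. nra.
Qed.
Lemma ex_RInt_plus_R f g a b : ex_RInt f a b -> ex_RInt g a b -> ex_RInt (fun x => f x + g x) a b.
Proof. intros Hf Hg. exact (ex_RInt_plus (V:=R_NormedModule) f g a b Hf Hg). Qed.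
Lemma ex_RInt_scal_R f a b l : ex_RInt f a b -> ex_RInt (fun x => l * f x) a b.
Proof. intros Hf. exact (ex_RInt_scal (V:=R_NormedModule) f a b l Hf). Qed.

Lemma RInt_abs_le_fun g h a b : a <= b -> ex_RInt g a b -> ex_RInt h a b ->
  (forall x, a <= x <= b -> Rabs (g x) <= h x) -> Rabs (RInt g a b) <= RInt h a b.
Proof.
  intros Hab Hg Hh H. apply Rabs_le. split.
  - rewrite <- (Rmult_1_l (RInt h a b)). rewrite Ropp_mult_distr_l, <- RInt_scal_R by auto.
    apply RInt_le; auto. apply ex_RInt_scal_R; auto. intros x Hx. specialize (H x ltac:(lra)).
    revert H; unfold Rabs; destruct Rcase_abs; lra.
  - apply RInt_le; auto. intros x Hx. specialize (H x ltac:(lra)).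
    revert H; unfold Rabs; destruct Rcase_abs; lra.
Qed.

Lemma int_bound (g e S : R -> R) a b c E : a <= b -> ex_RInt g a b -> ex_RInt e a b -> ex_RInt S a b ->
  0 < c -> 0 < E -> RInt e a b <= E ^ 2 -> 0 < RInt S a b ->
  (forall gam, 0 < gam -> forall th, a <= th <= b -> 2 * Rabs (g th) <= gam * e th + S th / (gam * c)) ->
  Rabs (RInt g a b) <= E * sqrt (RInt S a b) / sqrt c.
Proof.
  intros Hab Hg He HS Hc HE HeE HL Hp.
  set (L := RInt S a b) in *.
  assert (HqL : 0 < sqrt L) by (apply sqrt_lt_R0; lra).
  assert (Hqc : 0 < sqrt c) by (apply sqrt_lt_R0; lra).
  set (gam := sqrt L / (E * sqrt c)).
  assert (Hgam : 0 < gam) by (unfold gam; apply Rdiv_lt_0_compat; nra).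
  set (h := fun x => gam / 2 * e x + / (2 * gam * c) * S x).
  assert (Hh : ex_RInt h a b) by (apply ex_RInt_plus_R; apply ex_RInt_scal_R; auto).
  eapply Rle_trans. apply (RInt_abs_le_fun g h); auto.
  { intros x Hx. specialize (Hp gam Hgam x Hx). unfold h.
    replace (S x / (gam * c)) with (2 * (/ (2 * gam * c) * S x)) in Hp by (field; lra). lra. }
  unfold h. rewrite RInt_plus_R by (apply ex_RInt_scal_R; auto).
  rewrite !RInt_scal_R by auto. fold L.
  apply Rle_trans with (gam / 2 * E ^ 2 + / (2 * gam * c) * L).
  { apply Rplus_le_compat_r. apply Rmult_le_compat_l; lra. }
  right. unfold gam.
  assert (EL : L = sqrt L * sqrt L) by (rewrite sqrt_sqrt; lra).
  assert (Ec : c = sqrt c * sqrt c) by (rewrite sqrt_sqrt; lra).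
  set (qL := sqrt L) in *. set (qc := sqrt c) in *.
  rewrite EL, Ec. field. split; lra.
Qed.

Lemma arc_lemma (g dg s : R -> R) al be th th' :
  (forall x, is_derive g x (dg x)) -> (forall x, Rabs (dg x) <= s x) -> (forall x, continuous s x) ->
  al <= th <= be -> al <= th' <= be -> Rabs (g th' - g th) <= RInt s al be.
Proof.
  intros Hg Hdg Hs H1 H2.
  assert (Hex : forall u v, ex_RInt s u v) by (intros; apply (ex_RInt_continuous (V:=R_CompleteNormedModule)); auto).
  assert (Hs0 : forall x, 0 <= s x) by (intros x; eapply Rle_trans; [apply Rabs_pos|apply Hdg]).
  set (I := fun x => RInt s al x).
  assert (HI : forall x, is_derive I x (s x)).
  { intros x. apply (is_derive_RInt (V:=R_NormedModule) s I al x). 2: apply Hs.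
    exists (mkposreal 1 Rlt_0_1). intros y _. unfold I. apply (RInt_correct (V:=R_CompleteNormedModule)). apply Hex. }
  assert (Hmono : forall u v, u <= v -> Rabs (g v - g u) <= I v - I u).
  { intros u v Huv. destruct (Req_dec u v) as [->|Hne].
    { rewrite !Rminus_eq_0, Rabs_R0. lra. }
    apply Rabs_le. split.
    - destruct (MVT_gen (fun x => I x + g x) u v (fun x => s x + dg x)) as [c [Hc Heq]].
      + intros x _. apply (is_derive_plus (K:=R_AbsRing) (V:=R_NormedModule)); auto.
      + intros x _. apply continuity_pt_filterlim. apply (continuous_plus (K:=R_AbsRing) (V:=R_NormedModule)).
        apply ex_derive_continuous. eexists; apply HI. apply ex_derive_continuous. eexists; apply Hg.
      + assert (0 <= s c + dg c) by (specialize (Hdg c); revert Hdg; unfold Rabs; destruct Rcase_abs; lra).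
        assert (0 <= (s c + dg c) * (v - u)) by (apply Rmult_le_pos; lra). lra.
    - destruct (MVT_gen (fun x => I x - g x) u v (fun x => s x - dg x)) as [c [Hc Heq]].
      + intros x _. apply (is_derive_minus (K:=R_AbsRing) (V:=R_NormedModule)); auto.
      + intros x _. apply continuity_pt_filterlim. apply (continuous_minus (K:=R_AbsRing) (V:=R_NormedModule)).
        apply ex_derive_continuous. eexists; apply HI. apply ex_derive_continuous. eexists; apply Hg.
      + assert (0 <= s c - dg c) by (specialize (Hdg c); revert Hdg; unfold Rabs; destruct Rcase_abs; lra).
        assert (0 <= (s c - dg c) * (v - u)) by (apply Rmult_le_pos; lra). lra. }
  assert (Hch : forall u v, I u + RInt s u v = I v).
  { intros u v. unfold I. exact (RInt_Chasles (V:=R_CompleteNormedModule) s al u v (Hex _ _) (Hex _ _)). }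
  assert (Hpos : forall u v, u <= v -> 0 <= RInt s u v) by (intros; apply RInt_ge_0; auto).
  assert (HIa : I al = 0) by (unfold I; apply (RInt_point (V:=R_CompleteNormedModule))).
  assert (HIb : I be = RInt s al be) by reflexivity.
  destruct (Rle_dec th th') as [Hle|Hlt].
  - eapply Rle_trans. apply Hmono; auto.
    pose proof (Hch th' be) as X1. pose proof (Hch al th) as X2. pose proof (Hpos th' be ltac:(lra)).
    pose proof (Hpos al th ltac:(lra)). unfold I in *. lra.
  - rewrite Rabs_minus_sym. eapply Rle_trans. apply Hmono; lra.
    pose proof (Hch th be) as X1. pose proof (Hch al th') as X2. pose proof (Hpos th be ltac:(lra)).
    pose proof (Hpos al th' ltac:(lra)). unfold I in *. lra.
Qed.
Ltac fix_derive :=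
  repeat match goal with |- context [Derive (fun x => ?f x) ?t] =>
    change (Derive (fun x => f x) t) with (Derive f t) end.

Lemma Derive_of (f df : R -> R) : (forall t, is_derive f t (df t)) -> forall t, Derive f t = df t.
Proof. intros H t. apply is_derive_unique. apply H. Qed.

Lemma cont_of_ex_derive (f : R -> R) (x : R) : ex_derive f x -> continuous f x.
Proof. intros H. exact (ex_derive_continuous (K:=R_AbsRing) (V:=R_NormedModule) f x H). Qed.

Lemma ex_RInt_of_derive (f : R -> R) a b : (forall x, ex_derive f x) -> ex_RInt f a b.
Proof. intros H. apply (ex_RInt_continuous (V:=R_CompleteNormedModule)). intros; apply cont_of_ex_derive; auto. Qed.

Lemma speed_pos_sq p q : speed p q <> 0 -> 0 < p ^ 2 + q ^ 2.
Proof.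
  unfold speed. intros H. destruct (Rle_lt_dec (p^2+q^2) 0) as [Hle|]; auto.
  exfalso. apply H. assert (p^2+q^2 = 0) by nra. rewrite H0. apply sqrt_0.
Qed.

Lemma speed_pos p q : speed p q <> 0 -> 0 < speed p q.
Proof. intros H. unfold speed. apply sqrt_lt_R0. apply speed_pos_sq; auto. Qed.

Lemma speed_sq p q : speed p q * speed p q = p ^ 2 + q ^ 2.
Proof. unfold speed. apply sqrt_sqrt. nra. Qed.
Ltac side Hsq th :=
  repeat match goal with
  | |- _ /\ _ => split
  | |- True => exact I
  | |- ex_derive _ _ => first [solve [eauto] | eexists; solve [eauto]]
  | |- _ * _ <> 0 => apply Rmult_integral_contrapositive_currified
  | |- 1 <> 0 => exact R1_neq_R0
  | |- 0 < sqrt _ => apply sqrt_lt_R0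
  | |- sqrt _ <> 0 => apply Rgt_not_eq, sqrt_lt_R0
  | |- sqrt _ ^ _ <> 0 => apply pow_nonzero
  | |- 0 < _ => let H := fresh in pose proof (Hsq th) as H; nra
  end.

Lemma slice_test (A : R) (x1 y1 x2 y2 xt yt : R -> R) :
 (forall th, is_derive x1 th (x2 th)) -> (forall th, is_derive y1 th (y2 th)) ->
 (forall th, ex_derive x2 th) -> (forall th, ex_derive y2 th) ->
 (forall th, ex_derive xt th) -> (forall th, ex_derive yt th) ->
 (forall th, 0 < x1 th ^ 2 + y1 th ^ 2) ->
 forall th, ex_derive (fun th => (1 + A * curvature (x1 th) (y1 th) (x2 th) (y2 th) ^ 2) * (xt th ^ 2 + yt th ^ 2) * speed (x1 th) (y1 th)) th.
Proof.
  intros. unfold curvature, speed. auto_derive. side H5 th.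
Qed.
Ltac exRI Hsq := apply ex_RInt_of_derive; let th := fresh "th" in intros th; auto_derive; side Hsq th.
Lemma slice (A eps al be u1 u2 : R) (x0 y0 x1 y1 x2 y2 x3 y3 xt yt xtt ytt xttt yttt : R -> R) :
 0 < A -> 0 < eps -> 0 <= al -> al < be -> be <= 2 * PI -> u1 ^ 2 + u2 ^ 2 = 1 ->
 (forall th, is_derive x0 th (x1 th)) -> (forall th, is_derive y0 th (y1 th)) ->
 (forall th, is_derive x1 th (x2 th)) -> (forall th, is_derive y1 th (y2 th)) ->
 (forall th, is_derive x2 th (x3 th)) -> (forall th, is_derive y2 th (y3 th)) ->
 (forall th, is_derive xt th (xtt th)) -> (forall th, is_derive yt th (ytt th)) ->
 (forall th, is_derive xtt th (xttt th)) -> (forall th, is_derive ytt th (yttt th)) ->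
 (forall th, xt th * x1 th + yt th * y1 th = 0) ->
 (forall th, speed (x1 th) (y1 th) <> 0) ->
 RInt (fun th => (1 + A * curvature (x1 th) (y1 th) (x2 th) (y2 th) ^ 2)
       * (xt th ^ 2 + yt th ^ 2) * speed (x1 th) (y1 th)) 0 (2 * PI) = eps ^ 2 ->
 0 < RInt (fun th => speed (x1 th) (y1 th)) al be /\
 Rabs (RInt (fun th => (x1 th * xtt th + y1 th * ytt th) / speed (x1 th) (y1 th)) al be)
   <= eps * sqrt (RInt (fun th => speed (x1 th) (y1 th)) al be) / sqrt A /\
 Rabs (RInt (fun th => (u1 * xt th + u2 * yt th) * speed (x1 th) (y1 th)
                  + (u1 * x0 th + u2 * y0 th) * ((x1 th * xtt th + y1 th * ytt th) / speed (x1 th) (y1 th))) al be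
       * RInt (fun th => speed (x1 th) (y1 th)) al be
       - RInt (fun th => (u1 * x0 th + u2 * y0 th) * speed (x1 th) (y1 th)) al be
       * RInt (fun th => (x1 th * xtt th + y1 th * ytt th) / speed (x1 th) (y1 th)) al be)
   <= RInt (fun th => speed (x1 th) (y1 th)) al be * eps * sqrt (RInt (fun th => speed (x1 th) (y1 th)) al be)
      + RInt (fun th => speed (x1 th) (y1 th)) al be ^ 2 * eps * sqrt (RInt (fun th => speed (x1 th) (y1 th)) al be) / sqrt A /\
 (forall th0, al <= th0 <= be ->
   Rabs ((u1 * x0 th0 + u2 * y0 th0) * RInt (fun th => speed (x1 th) (y1 th)) al be
         - RInt (fun th => (u1 * x0 th + u2 * y0 th) * speed (x1 th) (y1 th)) al be)
   <= RInt (fun th => speed (x1 th) (y1 th)) al be ^ 2).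
Proof.
  intros HA He Hal Hab Hbe Hu Hx0 Hy0 Hx1 Hy1 Hx2 Hy2 Hxt Hyt Hxtt Hytt Hhor Hsp HE.
  assert (Hsq : forall th, 0 < x1 th ^ 2 + y1 th ^ 2) by (intros; apply speed_pos_sq; auto).
  assert (HS : forall th, 0 < speed (x1 th) (y1 th)) by (intros; apply speed_pos; auto).
  set (S := fun th => speed (x1 th) (y1 th)).
  assert (dS : forall th, ex_derive S th) by (intros th; unfold S, speed; auto_derive; side Hsq th).
  set (St := fun th => (x1 th * xtt th + y1 th * ytt th) / speed (x1 th) (y1 th)).
  assert (dSt : forall th, ex_derive St th) by (intros th; unfold St, speed; auto_derive; side Hsq th).
  set (F := fun th => u1 * x0 th + u2 * y0 th).
  assert (dF : forall th, ex_derive F th) by (intros th; unfold F; auto_derive; side Hsq th).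
  set (Ft := fun th => u1 * xt th + u2 * yt th).
  assert (dFt : forall th, ex_derive Ft th) by (intros th; unfold Ft; auto_derive; side Hsq th).
  set (e := fun th => (1 + A * curvature (x1 th) (y1 th) (x2 th) (y2 th) ^ 2)
       * (xt th ^ 2 + yt th ^ 2) * speed (x1 th) (y1 th)).
  assert (de : forall th, ex_derive e th) by (intros th; unfold e, curvature, speed; auto_derive; side Hsq th).
  fold S St F Ft e in HE |- *.
  set (L := (RInt S al be : R)).
  set (N := (RInt (fun th => F th * S th) al be : R)).
  set (Ld := (RInt St al be : R)).
  assert (He0 : forall th, 0 <= e th).
  { intros th. unfold e. apply Rmult_le_pos. apply Rmult_le_pos.
    assert (0 <= A * curvature (x1 th) (y1 th) (x2 th) (y2 th) ^ 2) by (apply Rmult_le_pos; [lra|apply pow2_ge_0]). lra.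
    nra. left; apply HS. }
  assert (HEJ : RInt e al be <= eps ^ 2).
  { assert (X1 := RInt_Chasles (V:=R_CompleteNormedModule) e 0 al be (ex_RInt_of_derive _ _ _ de) (ex_RInt_of_derive _ _ _ de)).
    assert (X2 := RInt_Chasles (V:=R_CompleteNormedModule) e 0 be (2*PI) (ex_RInt_of_derive _ _ _ de) (ex_RInt_of_derive _ _ _ de)).
    assert (0 <= RInt e 0 al) by (apply RInt_ge_0; auto; apply ex_RInt_of_derive; auto).
    assert (0 <= RInt e be (2*PI)) by (apply RInt_ge_0; auto; apply ex_RInt_of_derive; auto).
    change plus with Rplus in X1, X2. lra. }
  assert (HL : 0 < L).
  { unfold L. apply Rle_lt_trans with (RInt (fun _ => 0) al be).
    right. rewrite RInt_const. unfold scal; simpl; unfold mult; simpl. ring.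
    apply RInt_lt; auto. intros; apply cont_of_ex_derive; auto. intros; apply continuous_const.
    intros; apply HS. }
  assert (Hhd : forall th, x1 th * xtt th + y1 th * ytt th = - (xt th * x2 th + yt th * y2 th)).
  { intros th. 
    assert (D1 : is_derive (fun th => xt th * x1 th + yt th * y1 th) th
                  (xtt th * x1 th + xt th * x2 th + (ytt th * y1 th + yt th * y2 th))).
    { auto_derive. side Hsq th. fix_derive.
      rewrite (Derive_of xt xtt Hxt), (Derive_of x1 x2 Hx1), (Derive_of yt ytt Hyt), (Derive_of y1 y2 Hy1). ring. }
    assert (D2 : is_derive (fun th => xt th * x1 th + yt th * y1 th) th 0).
    { apply (is_derive_ext (fun _ => 0)). intros; rewrite Hhor; reflexivity. apply (is_derive_const (K:=R_AbsRing) (V:=R_NormedModule)). }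
    apply is_derive_unique in D1. apply is_derive_unique in D2. rewrite D1 in D2. lra. }
  assert (Harc : forall th th', al <= th <= be -> al <= th' <= be -> Rabs (F th' - F th) <= L).
  { intros th th' H1 H2. apply (arc_lemma F (fun th => u1 * x1 th + u2 * y1 th) S); auto.
    - intros x. unfold F. auto_derive. side Hsq x. fix_derive.
      rewrite (Derive_of x0 x1 Hx0), (Derive_of y0 y1 Hy0). ring.
    - intros x. apply abs_le_of_sq. left; apply HS. unfold S.
      replace (speed (x1 x) (y1 x) ^ 2) with (x1 x^2 + y1 x^2) by (rewrite <- speed_sq; ring).
      assert (0 <= (u1 * y1 x - u2 * x1 x) ^ 2) by apply pow2_ge_0.
      replace (x1 x ^ 2 + y1 x ^ 2) with ((u1^2+u2^2)*(x1 x ^ 2 + y1 x ^ 2)) by (rewrite Hu; ring).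
      nra.
    - intros; apply cont_of_ex_derive; auto. }
  assert (exS : forall a b, ex_RInt S a b) by (intros; apply ex_RInt_of_derive; auto).
  assert (exSt : forall a b, ex_RInt St a b) by (intros; apply ex_RInt_of_derive; auto).
  assert (exe : forall a b, ex_RInt e a b) by (intros; apply ex_RInt_of_derive; auto).
  assert (exFS : forall a b, ex_RInt (fun th => F th * S th) a b)
    by (intros; apply ex_RInt_of_derive; intros th; auto_derive; side Hsq th).
  assert (exFtS : forall a b, ex_RInt (fun th => Ft th * S th) a b)
    by (intros; apply ex_RInt_of_derive; intros th; auto_derive; side Hsq th).
  assert (exFSt : forall a b, ex_RInt (fun th => F th * St th) a b)
    by (intros; apply ex_RInt_of_derive; intros th; auto_derive; side Hsq th).
  assert (H4 : forall th0, al <= th0 <= be -> Rabs (F th0 * L - N) <= L ^ 2).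
  { intros th0 Hth0.
    replace (F th0 * L - N) with (RInt (fun th => (F th0 - F th) * S th) al be).
    2: { rewrite (RInt_ext _ (fun th => F th0 * S th - F th * S th)). 2: (intros; simpl; ring).
         rewrite RInt_minus_R, RInt_scal_R. reflexivity. all: exRI Hsq. }
    replace (L ^ 2) with (RInt (fun th => L * S th) al be) .
    2: { rewrite RInt_scal_R by auto. unfold L. rring. }
    apply RInt_abs_le_fun. lra. exRI Hsq. exRI Hsq.
    intros x Hx. rewrite Rabs_mult, (Rabs_right (S x)) by (left; apply HS).
    apply Rmult_le_compat_r. left; apply HS. rewrite Rabs_minus_sym. apply Harc; auto. }
  assert (HLd : Rabs Ld <= eps * sqrt L / sqrt A).
  { apply (int_bound St e S al be A eps); auto. lra.
    intros gam Hg th _. unfold St, e. apply pw_st; auto.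
    rewrite Hhd. field. apply Rgt_not_eq, HS. }
  split; [exact HL|]. split; [exact HLd|]. split; [|exact H4].
  change (Rabs (RInt (fun th => Ft th * S th + F th * St th) al be * L - N * Ld)
     <= L * eps * sqrt L + L ^ 2 * eps * sqrt L / sqrt A).
  rewrite RInt_plus_R by auto.
  set (I1 := (RInt (fun th => Ft th * S th) al be : R)).
  set (I2 := (RInt (fun th => F th * St th) al be : R)).
  assert (HI1 : Rabs I1 <= eps * sqrt L / sqrt 1).
  { apply (int_bound (fun th => Ft th * S th) e S al be 1 eps); auto. lra. lra.
    intros gam Hg th _. rewrite Rmult_1_r. unfold e. apply (pw_ft (xt th) (yt th) (x1 th) (y1 th) (x2 th) (y2 th) u1 u2); auto. lra. }
  rewrite sqrt_1, Rdiv_1_r in HI1.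
  set (g3 := fun th => (F th * L - N) * St th / L ^ 2).
  assert (exg3 : ex_RInt g3 al be).
  { unfold g3. exRI Hsq. }
  assert (Hg3 : RInt g3 al be = (I2 * L - N * Ld) / L ^ 2).
  { rewrite (RInt_ext _ (fun th => / L ^ 2 * (L * (F th * St th) - N * St th))).
    2: intros; unfold g3; cbv beta; rfield; lra.
    rewrite RInt_scal_R, RInt_minus_R, !RInt_scal_R.
    unfold I2, Ld. rfield. lra. all: exRI Hsq. }
  assert (HI3 : Rabs (RInt g3 al be) <= eps * sqrt L / sqrt A).
  { apply (int_bound g3 e S al be A eps); auto. lra.
    intros gam Hg th Hth. unfold g3.
    apply Rle_trans with (2 * Rabs (St th)).
    { apply Rmult_le_compat_l. lra. unfold Rdiv. rewrite !Rabs_mult.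
      rewrite (Rabs_right (/ L ^ 2)) by (left; apply Rinv_0_lt_compat, pow_lt; lra).
      specialize (H4 th Hth).
      apply Rle_trans with (L ^ 2 * Rabs (St th) * / L ^ 2).
      apply Rmult_le_compat_r. left; apply Rinv_0_lt_compat, pow_lt; lra.
      apply Rmult_le_compat_r. apply Rabs_pos. exact H4.
      right. field. lra. }
    unfold St, e. apply pw_st; auto.
    rewrite Hhd. field. apply Rgt_not_eq, HS. }
  rewrite Hg3 in HI3.
  assert (HL2 : 0 < L ^ 2) by (apply pow_lt; lra).
  assert (HI3' : Rabs (I2 * L - N * Ld) <= L ^ 2 * (eps * sqrt L / sqrt A)).
  { unfold Rdiv at 1 in HI3. rewrite Rabs_mult, (Rabs_right (/ L ^ 2)) in HI3 by (left; apply Rinv_0_lt_compat; lra).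
    apply Rmult_le_compat_l with (r := L ^ 2) in HI3. 2: lra.
    replace (L ^ 2 * (Rabs (I2 * L - N * Ld) * / L ^ 2)) with (Rabs (I2 * L - N * Ld)) in HI3 by (field; lra).
    exact HI3. }
  replace ((I1 + I2) * L - N * Ld) with (L * I1 + (I2 * L - N * Ld)) by ring.
  eapply Rle_trans. apply Rabs_triang. rewrite Rabs_mult, (Rabs_right L) by lra.
  assert (L * Rabs I1 <= L * (eps * sqrt L)) by (apply Rmult_le_compat_l; lra).
  replace (L * eps * sqrt L + L ^ 2 * eps * sqrt L / sqrt A) with (L * (eps * sqrt L) + L ^ 2 * (eps * sqrt L / sqrt A)).
  lra. unfold Rdiv. ring.
Qed.
Lemma final_arith p a e : 0 < p -> 0 < a -> 0 < e -> e ^ 2 * a ^ 2 < p ^ 2 / 4 -> e ^ 2 < p ^ 6 / 8 ->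
  e / p <= (e / p + p * a * e / 2) - e ^ 2 * a ^ 2 / 2 /\
  (e / p + p * a * e / 2) ^ 2 <= p ^ 4 / 2 /\
  e ^ 2 / ((e / p + p * a * e / 2) - e ^ 2 * a ^ 2 / 2)
   + e ^ 2 * ((e / p + p * a * e / 2) + e ^ 2 * a ^ 2 / 2) * a ^ 2
   + ((e / p + p * a * e / 2) + e ^ 2 * a ^ 2 / 2) ^ 2 + (e / p + p * a * e / 2) ^ 2
   <= 4 * (p ^ 3 * a + p) * e.
Proof.
  intros Hp Ha He H1 H2.
  set (E := e / p ^ 3). set (Y := a * e / p).
  assert (HE : e = p ^ 3 * E) by (unfold E; field; lra).
  assert (HY : a * e = p * Y) by (unfold Y; field; lra).
  assert (HE0 : 0 < E) by (unfold E; apply Rdiv_lt_0_compat; [lra|apply pow_lt; lra]).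
  assert (HY0 : 0 < Y) by (unfold Y; apply Rdiv_lt_0_compat; nra).
  assert (HY1 : Y < 1/2).
  { assert (Y ^ 2 < 1/4).
    { replace (Y ^ 2) with ((a*e)^2 / p^2) by (rewrite HY; field; lra).
      apply Rmult_lt_reg_r with (p ^ 2). apply pow_lt; lra.
      replace ((a * e) ^ 2 / p ^ 2 * p ^ 2) with (e^2*a^2) by (field; lra). lra. }
    nra. }
  assert (HE1 : E < 36/100).
  { assert (E ^ 2 < 1/8).
    { replace (E ^ 2) with (e^2 / p^6) by (rewrite HE; field; lra).
      apply Rmult_lt_reg_r with (p ^ 6). apply pow_lt; lra.
      replace (e ^ 2 / p ^ 6 * p ^ 6) with (e^2) by (field; lra). lra. }
    nra. }
  assert (Hs : e / p + p * a * e / 2 = p ^ 2 * (E + Y / 2)).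
  { replace (p * a * e) with (p * (a * e)) by ring. rewrite HY. rewrite HE at 1. field. lra. }
  assert (Hk : e ^ 2 * a ^ 2 / 2 = p ^ 2 * (Y ^ 2 / 2)).
  { replace (e ^ 2 * a ^ 2) with ((a * e) ^ 2) by ring. rewrite HY. field. }
  assert (Hep : e / p = p ^ 2 * E) by (rewrite HE; field; lra).
  assert (Hp2 : 0 < p ^ 2) by (apply pow_lt; lra).
  rewrite Hs, Hk, Hep.
  split. { assert (Y ^ 2 / 2 <= Y / 2) by nra. nra. }
  split. { replace ((p ^ 2 * (E + Y / 2)) ^ 2) with (p ^ 4 * (E + Y / 2) ^ 2) by ring.
           assert ((E + Y/2) ^ 2 <= 1/2) by nra. assert (0 < p ^ 4) by (apply pow_lt; lra). nra. }
  assert (Hd : p ^ 2 * E <= p ^ 2 * (E + Y / 2) - p ^ 2 * (Y ^ 2 / 2)) by (assert (Y ^ 2 / 2 <= Y / 2) by nra; nra).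
  assert (Hfrac : e ^ 2 / (p ^ 2 * (E + Y / 2) - p ^ 2 * (Y ^ 2 / 2)) <= p * e).
  { apply Rle_trans with (e ^ 2 / (p ^ 2 * E)).
    unfold Rdiv. apply Rmult_le_compat_l. nra. apply Rinv_le_contravar. nra. exact Hd.
    rewrite HE. right. field. split; lra. }
  assert (Hpe : p * e = p ^ 4 * E) by (rewrite HE; ring).
  assert (Hpa : p ^ 3 * a * e = p ^ 4 * Y) by (replace (p^3*a*e) with (p^3*(a*e)) by ring; rewrite HY; ring).
  assert (He2a2 : e ^ 2 * a ^ 2 = p ^ 2 * Y ^ 2) by (replace (e^2*a^2) with ((a*e)^2) by ring; rewrite HY; ring).
  replace (e ^ 2 * (p ^ 2 * (E + Y / 2) + p ^ 2 * (Y ^ 2 / 2)) * a ^ 2) with (e ^ 2 * a ^ 2 * (p ^ 2 * (E + Y / 2) + p ^ 2 * (Y ^ 2 / 2))) by ring.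
  rewrite He2a2.
  replace (4 * (p ^ 3 * a + p) * e) with (4 * (p ^ 3 * a * e) + 4 * (p * e)) by ring.
  rewrite Hpa, Hpe. rewrite Hpe in Hfrac.
  assert (Hp4 : 0 < p ^ 4) by (apply pow_lt; lra).
  assert (Hpoly : Y ^ 2 * (E + Y / 2 + Y ^ 2 / 2) + (E + Y / 2 + Y ^ 2 / 2) ^ 2 + (E + Y / 2) ^ 2 <= 4 * Y + 3 * E).
  { assert (HM : E + Y / 2 + Y ^ 2 / 2 <= 74/100) by nra.
    assert (HM2 : E + Y / 2 + Y ^ 2 / 2 <= E + Y) by nra.
    assert (0 < E + Y / 2 + Y ^ 2 / 2) by nra.
    assert ((E + Y / 2 + Y ^ 2 / 2) ^ 2 <= 74/100 * (E + Y)) by nra.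
    assert ((E + Y / 2) ^ 2 <= 74/100 * (E + Y)) by nra.
    assert (Y ^ 2 * (E + Y / 2 + Y ^ 2 / 2) <= Y / 2 * 74/100) by nra.
    nra. }
  replace (p ^ 2 * Y ^ 2 * (p ^ 2 * (E + Y / 2) + p ^ 2 * (Y ^ 2 / 2)) + (p ^ 2 * (E + Y / 2) + p ^ 2 * (Y ^ 2 / 2)) ^ 2 + (p ^ 2 * (E + Y / 2)) ^ 2)
    with (p ^ 4 * (Y ^ 2 * (E + Y / 2 + Y ^ 2 / 2) + (E + Y / 2 + Y ^ 2 / 2) ^ 2 + (E + Y / 2) ^ 2)) by ring.
  assert (p ^ 4 * (Y ^ 2 * (E + Y / 2 + Y ^ 2 / 2) + (E + Y / 2 + Y ^ 2 / 2) ^ 2 + (E + Y / 2) ^ 2) <= p ^ 4 * (4 * Y + 3 * E))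
    by (apply Rmult_le_compat_l; lra).
  lra.
Qed.
Lemma C2_plus F G : C2 F -> C2 G -> C2 (fun t th => F t th + G t th).
Proof. intros H1 H2 t th. apply continuity_2d_pt_plus; auto. Qed.
Lemma C2_mult F G : C2 F -> C2 G -> C2 (fun t th => F t th * G t th).
Proof. intros H1 H2 t th. apply continuity_2d_pt_mult; auto. Qed.
Lemma C2_const c : C2 (fun _ _ => c).
Proof. intros t th. apply continuity_2d_pt_const. Qed.
Lemma C2_speed X Y : C2 X -> C2 Y -> (forall t th, 0 < X t th ^ 2 + Y t th ^ 2) ->
  C2 (fun t th => speed (X t th) (Y t th)).
Proof.
  intros HX HY Hp t th. unfold speed.
  apply (continuity_1d_2d_pt_comp sqrt (fun t th => X t th ^ 2 + Y t th ^ 2)).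
  apply continuity_pt_sqrt. left; apply Hp.
  apply continuity_2d_pt_plus; simpl; apply continuity_2d_pt_mult; auto;
   apply continuity_2d_pt_mult; auto; apply continuity_2d_pt_const.
Qed.
Lemma C2_St X Y X' Y' : C2 X -> C2 Y -> C2 X' -> C2 Y' -> (forall t th, 0 < X t th ^ 2 + Y t th ^ 2) ->
  C2 (fun t th => (X t th * X' t th + Y t th * Y' t th) / speed (X t th) (Y t th)).
Proof.
  intros HX HY HX' HY' Hp t th. unfold Rdiv.
  apply continuity_2d_pt_mult. apply C2_plus; apply C2_mult; auto.
  apply continuity_2d_pt_inv. apply C2_speed; auto.
  apply Rgt_not_eq. unfold speed. apply sqrt_lt_R0. apply Hp.
Qed.
Lemma C2_lin u1 u2 X Y : C2 X -> C2 Y -> C2 (fun t th => u1 * X t th + u2 * Y t th).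
Proof. intros. apply C2_plus; apply C2_mult; auto; apply C2_const. Qed.

Lemma DT_lin u1 u2 X Y X' Y' : DT X X' -> DT Y Y' ->
  DT (fun t th => u1 * X t th + u2 * Y t th) (fun t th => u1 * X' t th + u2 * Y' t th).
Proof.
  intros HX HY t th Ht. specialize (HX t th Ht). specialize (HY t th Ht).
  set (fx := fun u => X u th) in *. set (fy := fun u => Y u th) in *.
  change (is_derive (fun u => u1 * fx u + u2 * fy u) t (u1 * X' t th + u2 * Y' t th)).
  auto_derive. split; [eexists; exact HX|split; [eexists; exact HY|exact I]].
  fix_derive. rewrite (is_derive_unique fx t _ HX), (is_derive_unique fy t _ HY). ring.
Qed.

Lemma DT_mult X Y X' Y' : DT X X' -> DT Y Y' ->
  DT (fun t th => X t th * Y t th) (fun t th => X' t th * Y t th + X t th * Y' t th).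
Proof.
  intros HX HY t th Ht. specialize (HX t th Ht). specialize (HY t th Ht).
  set (fx := fun u => X u th) in *. set (fy := fun u => Y u th) in *.
  change (is_derive (fun u => fx u * fy u) t (X' t th * fy t + fx t * Y' t th)).
  auto_derive. split; [eexists; exact HX|split; [eexists; exact HY|exact I]].
  fix_derive. rewrite (is_derive_unique fx t _ HX), (is_derive_unique fy t _ HY). ring.
Qed.

Lemma DT_speed X Y X' Y' : DT X X' -> DT Y Y' -> (forall t th, 0 < X t th ^ 2 + Y t th ^ 2) ->
  DT (fun t th => speed (X t th) (Y t th))
     (fun t th => (X t th * X' t th + Y t th * Y' t th) / speed (X t th) (Y t th)).
Proof.
  intros HX HY Hp t th Ht. specialize (HX t th Ht). specialize (HY t th Ht). specialize (Hp t th).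
  set (fx := fun u => X u th) in *. set (fy := fun u => Y u th) in *.
  change (is_derive (fun u => sqrt (fx u ^ 2 + fy u ^ 2)) t ((fx t * X' t th + fy t * Y' t th) / sqrt (fx t ^ 2 + fy t ^ 2))).
  auto_derive. split; [eexists; exact HX|split; [eexists; exact HY|split; [|exact I]]].
  unfold fx, fy; nra.
  fix_derive. rewrite (is_derive_unique fx t _ HX), (is_derive_unique fy t _ HY).
  replace (fx t * (fx t * 1) + fy t * (fy t * 1)) with (fx t ^ 2 + fy t ^ 2) by ring.
  rfield. apply Rgt_not_eq, sqrt_lt_R0. unfold fx, fy in *; nra.
Qed.
Lemma Rpower_pos' x y : 0 < Rpower x y.
Proof. unfold Rpower. apply exp_pos. Qed.

Lemma Rpower_nat x y n : 0 < x -> Rpower x y ^ n = Rpower x (y * INR n).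
Proof. intros Hx. rewrite <- Rpower_pow by apply Rpower_pos'. apply Rpower_mult. Qed.

Lemma rp_facts ell A : 0 < ell -> 0 < A ->
  0 < Rpower ell (1/4) /\ 0 < Rpower A (-(1/4)) /\
  ell = Rpower ell (1/4) ^ 4 /\ Rpower ell (3/4) = Rpower ell (1/4) ^ 3 /\
  Rpower ell (3/2) = Rpower ell (1/4) ^ 6 /\ sqrt A * Rpower A (-(1/4)) ^ 2 = 1 /\
  sqrt (A * ell) = Rpower ell (1/4) ^ 2 / Rpower A (-(1/4)) ^ 2.
Proof.
  intros Hl HA.
  assert (E : forall x y n, 0 < x -> Rpower x y ^ n = Rpower x (y * INR n)) by (intros; apply Rpower_nat; auto).
  split. apply Rpower_pos'. split. apply Rpower_pos'.
  rewrite !E by auto. simpl INR.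
  assert (Hs : forall x, 0 < x -> sqrt x = Rpower x (1/4 * (1+1))).
  { intros x Hx. rewrite <- Rpower_sqrt by auto. f_equal. field. }
  split. { replace (1/4 * (1+1+1+1)) with 1 by field. rewrite Rpower_1; auto. }
  split. { f_equal. field. }
  split. { f_equal. field. }
  split. { rewrite Hs by auto. rewrite <- Rpower_plus. replace (1 / 4 * (1 + 1) + - (1 / 4) * (1 + 1)) with 0 by field.
           apply Rpower_O; auto. }
  rewrite sqrt_mult by lra. rewrite !Hs by auto.
  replace (/ 4 * (1 + 1)) with (1/4*(1+1)) by field.
  replace (- (1 / 4) * (1 + 1)) with (- (1/4 * (1+1))) by ring. rewrite Rpower_Ropp.
  unfold Rdiv. rewrite Rinv_inv. ring.
Qed.

Lemma per_nat (f : R -> R) : (forall x, f (x + 2 * PI) = f x) -> forall n x, f (x + 2 * PI * INR n) = f x.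
Proof.
  intros H n. induction n as [|n IH]; intros x.
  - simpl. rewrite Rmult_0_r, Rplus_0_r. reflexivity.
  - rewrite S_INR. replace (x + 2 * PI * (INR n + 1)) with ((x + 2 * PI * INR n) + 2 * PI) by ring.
    rewrite H. apply IH.
Qed.

Lemma per_Z (f : R -> R) : (forall x, f (x + 2 * PI) = f x) -> forall z x, f (x + 2 * PI * IZR z) = f x.
Proof.
  intros H z x. destruct (Z_le_gt_dec 0 z) as [Hz|Hz].
  - replace (IZR z) with (INR (Z.to_nat z)). apply per_nat; auto.
    rewrite INR_IZR_INZ, Z2Nat.id; auto.
  - replace (IZR z) with (- INR (Z.to_nat (- z))).
    rewrite <- (per_nat f H (Z.to_nat (-z)) (x + 2 * PI * - INR (Z.to_nat (- z)))). f_equal. ring.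
    rewrite INR_IZR_INZ, Z2Nat.id by lia. rewrite opp_IZR. ring.
Qed.

Lemma reduce_angle th : exists th0 z, 0 <= th0 < 2 * PI /\ th = th0 + 2 * PI * IZR z.
Proof.
  pose proof PI_RGT_0 as Hpi.
  destruct (archimed (th / (2 * PI))) as [H1 H2].
  exists (th - 2 * PI * (IZR (up (th / (2 * PI))) - 1)), (up (th / (2 * PI)) - 1)%Z.
  rewrite minus_IZR. simpl IZR. split; [|ring].
  set (z := IZR (up (th / (2 * PI)))) in *.
  assert (th = 2 * PI * (th / (2 * PI))) by (field; lra).
  split; nra.
Qed.

Theorem proposition3p5 (A eps : R) (Dx Dy : nat -> nat -> R -> R -> R) :
  0 < A ->
  smooth_family Dx -> smooth_family Dy ->
  (* 2pi-periodic in theta: c(t,.) is a map S^1 -> R^2 *)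
  (forall t th, I01 t ->
     Dx 0%nat 0%nat t (th + 2 * PI) = Dx 0%nat 0%nat t th /\ Dy 0%nat 0%nat t (th + 2 * PI) = Dy 0%nat 0%nat t th) ->
  (* each c(t,.) is an immersion *)
  (forall t th, I01 t -> speed (Dx 0%nat 1%nat t th) (Dy 0%nat 1%nat t th) <> 0) ->
  let ell := RInt (fun th => speed (Dx 0%nat 1%nat 0 th) (Dy 0%nat 1%nat 0 th)) 0 (2 * PI) in
  (* c_0 = c(0,.) has constant speed ell / 2pi *)
  (forall th, speed (Dx 0%nat 1%nat 0 th) (Dy 0%nat 1%nat 0 th) = ell / (2 * PI)) ->
  0 < eps ->
  eps < Rmin (2 * sqrt (A * ell)) (Rpower ell (3 / 2)) / 8 ->
  (* horizontal *)
  (forall t th, I01 t ->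
     Dx 1%nat 0%nat t th * Dx 0%nat 1%nat t th + Dy 1%nat 0%nat t th * Dy 0%nat 1%nat t th = 0) ->
  (* constant energy eps^2 *)
  (forall t, I01 t ->
     RInt (fun th =>
       (1 + A * (curvature (Dx 0%nat 1%nat t th) (Dy 0%nat 1%nat t th) (Dx 0%nat 2%nat t th) (Dy 0%nat 2%nat t th)) ^ 2)
       * (Dx 1%nat 0%nat t th ^ 2 + Dy 1%nat 0%nat t th ^ 2)
       * speed (Dx 0%nat 1%nat t th) (Dy 0%nat 1%nat t th)) 0 (2 * PI) = eps ^ 2) ->
  let eta := 4 * (Rpower ell (3 / 4) * Rpower A (- (1 / 4)) + Rpower ell (1 / 4)) * sqrt eps in
  forall th,
    sqrt ((Dx 0%nat 0%nat 0 th - Dx 0%nat 0%nat 1 th) ^ 2 + (Dy 0%nat 0%nat 0 th - Dy 0%nat 0%nat 1 th) ^ 2) <= eta.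
Proof.
  intros HA HsX HsY Hper Himm ell Hcs He Heps Hhor Hen eta th.
  pose proof PI_RGT_0 as Hpi.
  assert (I0 : I01 0) by (unfold I01; lra). assert (I1 : I01 1) by (unfold I01; lra).
  assert (Hs0 : 0 < ell / (2 * PI)) by (rewrite <- (Hcs 0); apply speed_pos; apply Himm; auto).
  assert (Hell : 0 < ell).
  { replace ell with (ell / (2 * PI) * (2 * PI)) by (field; lra). apply Rmult_lt_0_compat; lra. }
  destruct (rp_facts ell A Hell HA) as [Hp [Ha [Hl4 [Hl34 [Hl32 [HsAa HsAl]]]]]].
  unfold eta. rewrite Hl34. rewrite Hl32, HsAl in Heps.
  set (p := Rpower ell (1/4)) in *. set (a := Rpower A (-(1/4))) in *.
  set (e := sqrt eps).
  assert (He0 : 0 < e) by (apply sqrt_lt_R0; lra).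
  assert (He2 : eps = e ^ 2) by (unfold e; rewrite pow2_sqrt; lra).
  assert (Hc1 : e ^ 2 * a ^ 2 < p ^ 2 / 4).
  { pose proof (Rmin_l (2 * (p ^ 2 / a ^ 2)) (p ^ 6)). rewrite <- He2.
    assert (eps < p ^ 2 / a ^ 2 / 4) by lra.
    assert (Ha2 : 0 < a ^ 2) by (apply pow_lt; lra).
    apply Rmult_lt_compat_r with (r := a ^ 2) in H0; auto.
    replace (p ^ 2 / a ^ 2 / 4 * a ^ 2) with (p ^ 2 / 4) in H0 by (field; lra). exact H0. }
  assert (Hc2 : e ^ 2 < p ^ 6 / 8) by (pose proof (Rmin_r (2 * (p ^ 2 / a ^ 2)) (p ^ 6)); lra).
  destruct (final_arith p a e Hp Ha He0 Hc1 Hc2) as [Hsk [Hsig2 Hfin]].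
  set (sg := e / p + p * a * e / 2) in *. set (k := e ^ 2 * a ^ 2 / 2) in *.
  assert (Hep : 0 < e / p) by (apply Rdiv_lt_0_compat; lra).
  assert (HsA : sqrt A = / a ^ 2) by (apply (Rmult_eq_reg_r (a ^ 2)); [rewrite HsAa; field; lra| apply pow_nonzero; lra]).
  assert (Hk : eps / (2 * sqrt A) = k) by (unfold k; rewrite HsA, He2; field; lra).
  destruct (reduce_angle th) as [th0 [z [Hth0 Hz]]].
  assert (Hpx : forall t, I01 t -> Dx 0%nat 0%nat t th = Dx 0%nat 0%nat t th0).
  { intros t Ht. rewrite Hz. apply (per_Z (Dx 0%nat 0%nat t)). intros x; apply (Hper t x Ht). }
  assert (Hpy : forall t, I01 t -> Dy 0%nat 0%nat t th = Dy 0%nat 0%nat t th0).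
  { intros t Ht. rewrite Hz. apply (per_Z (Dy 0%nat 0%nat t)). intros x; apply (Hper t x Ht). }
  rewrite (Hpx 0 I0), (Hpx 1 I1), (Hpy 0 I0), (Hpy 1 I1).
  assert (Hsg : 0 < sg) by (assert (0 < k) by (unfold k; apply Rdiv_lt_0_compat; [apply Rmult_lt_0_compat; apply pow_lt|]; lra); lra).
  set (dl := sg ^ 2 / (ell / (2 * PI))).
  assert (Hdl0 : 0 < dl) by (unfold dl; apply Rdiv_lt_0_compat; [apply pow_lt|]; lra).
  assert (Hdl1 : dl <= PI).
  { unfold dl. apply Rmult_le_reg_r with (ell / (2 * PI)); auto.
    replace (sg ^ 2 / (ell / (2 * PI)) * (ell / (2 * PI))) with (sg ^ 2) by (field; lra).
    replace (PI * (ell / (2 * PI))) with (ell / 2) by (field; lra). lra. }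
  assert (Harc : exists al be, 0 <= al /\ al < be /\ be <= 2 * PI /\ be - al = dl /\ al <= th0 <= be).
  { destruct (Rle_dec th0 PI).
    - exists th0, (th0 + dl). repeat split; lra.
    - exists (th0 - dl), th0. repeat split; lra. }
  destruct Harc as [al [be [Hal [Hab [Hbe [Hdl Hin]]]]]].
  set (dx := Dx 0%nat 0%nat 1 th0 - Dx 0%nat 0%nat 0 th0).
  set (dy := Dy 0%nat 0%nat 1 th0 - Dy 0%nat 0%nat 0 th0).
  replace ((Dx 0%nat 0%nat 0 th0 - Dx 0%nat 0%nat 1 th0) ^ 2 + (Dy 0%nat 0%nat 0 th0 - Dy 0%nat 0%nat 1 th0) ^ 2)
    with (dx ^ 2 + dy ^ 2) by (unfold dx, dy; ring).
  set (D := sqrt (dx ^ 2 + dy ^ 2)).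
  assert (Heta0 : 0 <= 4 * (p ^ 3 * a + p) * e).
  { apply Rmult_le_pos; [|lra]. apply Rmult_le_pos; [lra|]. assert (0 < p ^ 3) by (apply pow_lt; lra). nra. }
  destruct (Req_dec D 0) as [HD0|HD0]. { rewrite HD0; lra. }
  assert (HD : 0 < D) by (assert (0 <= D) by apply sqrt_pos; lra).
  assert (HD2 : D * D = dx ^ 2 + dy ^ 2) by (unfold D; apply sqrt_sqrt; nra).
  set (u1 := dx / D). set (u2 := dy / D).
  assert (Hu : u1 ^ 2 + u2 ^ 2 = 1) by (unfold u1, u2; replace ((dx / D) ^ 2 + (dy / D) ^ 2) with ((dx ^ 2 + dy ^ 2) / (D * D)) by (field; lra); rewrite <- HD2; field; lra).
  assert (HuD : D = (u1 * Dx 0%nat 0%nat 1 th0 + u2 * Dy 0%nat 0%nat 1 th0) - (u1 * Dx 0%nat 0%nat 0 th0 + u2 * Dy 0%nat 0%nat 0 th0)).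
  { replace ((u1 * Dx 0%nat 0%nat 1 th0 + u2 * Dy 0%nat 0%nat 1 th0) - (u1 * Dx 0%nat 0%nat 0 th0 + u2 * Dy 0%nat 0%nat 0 th0))
      with (u1 * dx + u2 * dy) by (unfold dx, dy; ring).
    unfold u1, u2. replace (dx / D * dx + dy / D * dy) with ((dx ^ 2 + dy ^ 2) / D) by (field; lra).
    rewrite <- HD2. field. lra. }
  assert (CX : forall i j, C2 (clp (Dx i j))) by (intros; apply cont01_C2; apply (HsX i j)).
  assert (CY : forall i j, C2 (clp (Dy i j))) by (intros; apply cont01_C2; apply (HsY i j)).
  assert (DX : forall i j, DT (clp (Dx i j)) (clp (Dx (S i) j))) by (intros; apply pderiv_DT; apply (HsX i j)).
  assert (DY : forall i j, DT (clp (Dy i j)) (clp (Dy (S i) j))) by (intros; apply pderiv_DT; apply (HsY i j)).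
  assert (Hpos : forall t w, 0 < clp (Dx 0%nat 1%nat) t w ^ 2 + clp (Dy 0%nat 1%nat) t w ^ 2).
  { intros t w. apply speed_pos_sq. apply Himm. apply clamp_I01. }
  set (Sf := fun t w => speed (clp (Dx 0%nat 1%nat) t w) (clp (Dy 0%nat 1%nat) t w)).
  set (Stf := fun t w => (clp (Dx 0%nat 1%nat) t w * clp (Dx 1%nat 1%nat) t w + clp (Dy 0%nat 1%nat) t w * clp (Dy 1%nat 1%nat) t w)
                 / speed (clp (Dx 0%nat 1%nat) t w) (clp (Dy 0%nat 1%nat) t w)).
  set (Ff := fun t w => u1 * clp (Dx 0%nat 0%nat) t w + u2 * clp (Dy 0%nat 0%nat) t w).
  set (Ftf := fun t w => u1 * clp (Dx 1%nat 0%nat) t w + u2 * clp (Dy 1%nat 0%nat) t w).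
  set (FSf := fun t w => Ff t w * Sf t w).
  set (FStf := fun t w => Ftf t w * Sf t w + Ff t w * Stf t w).
  assert (CS : C2 Sf) by (apply C2_speed; auto).
  assert (CSt : C2 Stf) by (apply C2_St; auto).
  assert (CF : C2 Ff) by (apply C2_lin; auto).
  assert (CFt : C2 Ftf) by (apply C2_lin; auto).
  assert (CFS : C2 FSf) by (apply C2_mult; auto).
  assert (CFSt : C2 FStf) by (apply C2_plus; apply C2_mult; auto).
  assert (DS : DT Sf Stf) by (apply DT_speed; auto).
  assert (DF : DT Ff Ftf) by (apply DT_lin; auto).
  assert (DFS : DT FSf FStf) by (apply DT_mult; auto).
  set (Lf := fun t => RInt (Sf t) al be).
  set (Nf := fun t => RInt (FSf t) al be).
  set (Ldf := fun t => RInt (Stf t) al be).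
  set (Ndf := fun t => RInt (FStf t) al be).
  assert (Hsl : forall t, 0 <= t <= 1 ->
    0 < Lf t /\ Rabs (Ldf t) <= eps * sqrt (Lf t) / sqrt A /\
    Rabs (Ndf t * Lf t - Nf t * Ldf t) <= Lf t * eps * sqrt (Lf t) + Lf t ^ 2 * eps * sqrt (Lf t) / sqrt A /\
    (forall th1, al <= th1 <= be -> Rabs (Ff t th1 * Lf t - Nf t) <= Lf t ^ 2)).
  { intros t Ht. assert (It : I01 t) by (unfold I01; lra).
    assert (Hc : clamp t = t) by (apply clamp_id; auto).
    unfold Lf, Nf, Ldf, Ndf, FStf, FSf, Ftf, Ff, Stf, Sf, clp. cbv beta. rewrite Hc.
    exact (slice A eps al be u1 u2 (Dx 0%nat 0%nat t) (Dy 0%nat 0%nat t) (Dx 0%nat 1%nat t) (Dy 0%nat 1%nat t)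
      (Dx 0%nat 2%nat t) (Dy 0%nat 2%nat t) (Dx 0%nat 3%nat t) (Dy 0%nat 3%nat t)
      (Dx 1%nat 0%nat t) (Dy 1%nat 0%nat t) (Dx 1%nat 1%nat t) (Dy 1%nat 1%nat t) (Dx 1%nat 2%nat t) (Dy 1%nat 2%nat t)
      HA He Hal Hab Hbe Hu
      (fun w => proj2 (proj2 (HsX 0%nat 0%nat)) t w It) (fun w => proj2 (proj2 (HsY 0%nat 0%nat)) t w It)
      (fun w => proj2 (proj2 (HsX 0%nat 1%nat)) t w It) (fun w => proj2 (proj2 (HsY 0%nat 1%nat)) t w It)
      (fun w => proj2 (proj2 (HsX 0%nat 2%nat)) t w It) (fun w => proj2 (proj2 (HsY 0%nat 2%nat)) t w It)
      (fun w => proj2 (proj2 (HsX 1%nat 0%nat)) t w It) (fun w => proj2 (proj2 (HsY 1%nat 0%nat)) t w It)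
      (fun w => proj2 (proj2 (HsX 1%nat 1%nat)) t w It) (fun w => proj2 (proj2 (HsY 1%nat 1%nat)) t w It)
      (fun w => Hhor t w It) (fun w => Himm t w It) (Hen t It)). }
  assert (HL0 : Lf 0 = sg ^ 2).
  { unfold Lf, Sf, clp. cbv beta. rewrite (clamp_id 0 I0).
    rewrite (RInt_ext _ (fun _ => ell / (2 * PI))) by (intros; apply Hcs).
    rewrite RInt_const. unfold scal; simpl; unfold mult; simpl. rewrite Hdl. unfold dl. field. lra. }
  assert (HsL0 : sqrt (Lf 0) = sg) by (rewrite HL0; apply sqrt_pow2; lra).
  destruct (time_part Lf Nf Ldf Ndf eps A HA He) as [T1 T2].
  - intros t. apply (RInt_param_cont Sf al be t); auto; lra.
  - intros t. apply (RInt_param_cont FSf al be t); auto; lra.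
  - intros t Ht. apply (RInt_param_der Sf Stf al be t); auto.
  - intros t Ht. apply (RInt_param_der FSf FStf al be t); auto.
  - intros t Ht. apply (Hsl t Ht).
  - intros t Ht. apply (Hsl t Ht).
  - intros t Ht. apply (Hsl t Ht).
  - rewrite Hk, HsL0. lra.
  - rewrite Hk, HsL0 in T1, T2.
    destruct (Hsl 0 ltac:(lra)) as [L0p [_ [_ H40]]]. destruct (Hsl 1 ltac:(lra)) as [L1p [_ [_ H41]]].
    specialize (H40 th0 Hin). specialize (H41 th0 Hin).
    unfold Ff, clp in H40, H41. rewrite (clamp_id 0 I0) in H40. rewrite (clamp_id 1 I1) in H41.
    set (F0 := u1 * Dx 0%nat 0%nat 0 th0 + u2 * Dy 0%nat 0%nat 0 th0) in *.
    set (F1 := u1 * Dx 0%nat 0%nat 1 th0 + u2 * Dy 0%nat 0%nat 1 th0) in *.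
    assert (HF1 : F1 <= Nf 1 / Lf 1 + Lf 1).
    { assert (F1 * Lf 1 - Nf 1 <= Lf 1 ^ 2) by (revert H41; unfold Rabs; destruct Rcase_abs; lra).
      apply Rmult_le_reg_r with (Lf 1); auto. replace ((Nf 1 / Lf 1 + Lf 1) * Lf 1) with (Nf 1 + Lf 1 ^ 2) by (field; lra). lra. }
    assert (HF0 : Nf 0 / Lf 0 - Lf 0 <= F0).
    { assert (- (Lf 0 ^ 2) <= F0 * Lf 0 - Nf 0) by (revert H40; unfold Rabs; destruct Rcase_abs; lra).
      apply Rmult_le_reg_r with (Lf 0); auto. replace ((Nf 0 / Lf 0 - Lf 0) * Lf 0) with (Nf 0 - Lf 0 ^ 2) by (field; lra). lra. }
    assert (HL1 : Lf 1 <= (sg + k) ^ 2).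
    { rewrite <- (pow2_sqrt (Lf 1)) by lra. apply pow_incr. split. apply sqrt_pos. exact T1. }
    assert (HT2 : eps / (sg - k) + eps * (sg + k) / sqrt A = e ^ 2 / (sg - k) + e ^ 2 * (sg + k) * a ^ 2).
    { rewrite HsA, He2. field. split; try lra; apply pow_nonzero; lra. }
    change (D <= 4 * (p ^ 3 * a + p) * e). rewrite HuD. fold F0 F1. lra.
Qed.
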